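(* Let $\lambda\in\mathbb N$ be fixed and $p=\frac{\lambda+1}{\lambda}$. For every rational $\alpha\in(0,1]$, every profile $P$, every ranking $r$ that the $p$-geometric rule may output on $P$ (under any tie-breaking), and every group $N'$ that is $(\alpha,\lambda)$-significant in $P$, we have $\mathrm{avg}(N',r_{\le k})\ge\lambda$ where $k=\lceil\frac{e(\lambda+1)}{\alpha}\rceil$.
   Context: Let $N=[n]$ be a finite set of voters and $A$ a finite set of $m$ alternatives; a profile $P=(A_1,\dots,A_n)$ gives each voter $i$ a non-empty approval set $A_i\subseteq A$. A ranking $r=(r_1,\dots,r_m)$ is a linear order of $A$, $r_{\le k}=\{r_1,\dots,r_k\}$, with $r_{\le k}=A$ for $k\ge m$. For nonempty $N'\subseteq N$ and $S\subseteq A$, $\mathrm{avg}(N',S)=\frac1{|N'|}\sum_{i\in N'}|A_i\cap S|$. The cohesiveness of $N'$ is $\lambda(N')=|\bigcap_{i\in N'}A_i|$; $N'$ is $(\alpha,\lambda)$-significant in $P$ if $|N'|=\lceil\alpha n\rceil$ and $\lambda(N')\ge\lambda$. For a weight vector $\mathbf w=(w_1,w_2,\dots)$ of nonnegative reals and $S\subseteq A$, let $w(S)=\sum_{i\in N}\sum_{j=1}^{|A_i\cap S|}w_j$. The rule $\mathbf w$-RAV builds $r$ iteratively from the empty ranking: at step $k\in[m]$ it appends an unranked alternative $a$ maximizing $w(r_{\le k-1}\cup\{a\})-w(r_{\le k-1})$ (ties broken arbitrarily). The $p$-geometric rule ($p>1$) is $\mathbf w$-RAV with $\mathbf w=(\frac1p,\frac1{p^2},\frac1{p^3},\dots)$.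 $e$ is Euler's number. *)

(* Defs.v *)
From Stdlib Require Import Reals List Arith QArith Qreals Permutation.
Import ListNotations.
Open Scope R_scope.

(* Voters are 0..n-1, alternatives are 0..m-1.
   A profile is a boolean approval relation [P i a] ("voter i approves a"). *)

Definition approved_count (P : nat -> nat -> bool) (i : nat) (S : list nat) : nat :=
  length (filter (fun a => P i a) S).

Definition wsum (w : nat -> R) (c : nat) : R :=
  fold_right Rplus 0 (map w (seq 1 c)).

Definition wscore (w : nat -> R) (P : nat -> nat -> bool) (n : nat) (S : list nat) : R :=
  fold_right Rplus 0 (map (fun i => wsum w (approved_count P i S)) (seq 0 n)).

(* r is a possible output of w-RAV on profile P (under some tie-breaking):
   r is a linear order of the m alternatives and at each step k (0-based)
   the chosen alternative r_k maximizes the marginal gain among the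
   unranked alternatives. *)
Definition is_wRAV_output (w : nat -> R) (P : nat -> nat -> bool) (n m : nat)
  (r : list nat) : Prop :=
  Permutation r (seq 0 m) /\
  forall k, (k < m)%nat -> forall a, (a < m)%nat -> ~ In a (firstn k r) ->
    wscore w P n (firstn k r ++ [a]) - wscore w P n (firstn k r)
    <= wscore w P n (firstn k r ++ [nth k r 0%nat]) - wscore w P n (firstn k r).

Definition geom_weights (p : R) : nat -> R := fun j => / (p ^ j).

Definition is_geometric_output (p : R) (P : nat -> nat -> bool) (n m : nat)
  (r : list nat) : Prop :=
  is_wRAV_output (geom_weights p) P n m r.

Definition valid_profile (P : nat -> nat -> bool) (n m : nat) : Prop :=
  forall i, (i < n)%nat -> exists a, (a < m)%nat /\ P i a = true.

Definition is_ceil (k : nat) (x : R) : Prop := INR k - 1 < x /\ x <= INR k.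

Definition cohesiveness (P : nat -> nat -> bool) (m : nat) (N' : list nat) : nat :=
  length (filter (fun a => forallb (fun i => P i a) N') (seq 0 m)).

Definition significant (P : nat -> nat -> bool) (n m : nat) (alpha : R)
  (lam : nat) (N' : list nat) : Prop :=
  NoDup N' /\ (forall i, In i N' -> (i < n)%nat) /\
  is_ceil (length N') (alpha * INR n) /\ (lam <= cohesiveness P m N')%nat.

Definition avg (P : nat -> nat -> bool) (N' : list nat) (S : list nat) : R :=
  INR (fold_right Nat.add 0%nat (map (fun i => approved_count P i S) N'))
  / INR (length N').

(* Main.v *)
Require Import Defs.
From Stdlib Require Import Reals List Arith QArith Qreals Permutation Lia Lra Classical.
Import ListNotations.
Open Scope R_scope.

Definition sumR (l : list R) := fold_right Rplus 0 l.

Lemma sum_app l1 l2 : fold_right Rplus 0 (l1 ++ l2) = fold_right Rplus 0 l1 + fold_right Rplus 0 l2.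
Proof. induction l1; simpl; [lra|rewrite IHl1; lra]. Qed.

Lemma sum_map_sub (f g : nat -> R) l :
  fold_right Rplus 0 (map f l) - fold_right Rplus 0 (map g l) =
  fold_right Rplus 0 (map (fun x => f x - g x) l).
Proof. induction l; simpl; lra. Qed.

Lemma sum_map_le (f g : nat -> R) l : (forall x, In x l -> f x <= g x) ->
  fold_right Rplus 0 (map f l) <= fold_right Rplus 0 (map g l).
Proof. induction l; simpl; intros H; [lra|].
  assert (f a <= g a) by auto. assert (fold_right Rplus 0 (map f l) <= fold_right Rplus 0 (map g l)) by auto. lra. Qed.

Lemma sum_map_const_le (f : nat -> R) a l : (forall x, In x l -> f x <= a) ->
  fold_right Rplus 0 (map f l) <= INR (length l) * a.
Proof. induction l; cbn [length map fold_right]; intros H; [simpl; lra|].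
  assert (f a0 <= a) by (apply H; left; auto). assert (fold_right Rplus 0 (map f l) <= INR (length l) * a) by (apply IHl; intros; apply H; right; auto).
  rewrite S_INR. lra. Qed.

Lemma sum_affine (f : nat -> nat) a b l :
  fold_right Rplus 0 (map (fun i => a + b * INR (f i)) l) =
  a * INR (length l) + b * INR (fold_right Nat.add 0%nat (map f l)).
Proof. induction l; cbn [length map fold_right]; [simpl; lra|]. rewrite IHl, plus_INR, S_INR. ring. Qed.

Lemma sum_remove_le (f : nat -> R) a l : (forall x, 0 <= f x) ->
  fold_right Rplus 0 (map f (remove Nat.eq_dec a l)) <= fold_right Rplus 0 (map f l).
Proof. intros H; induction l; simpl; [lra|].
  destruct (Nat.eq_dec a a0); simpl; specialize (H a0); lra. Qed.

Lemma sum_remove_in (f : nat -> R) a l : (forall x, 0 <= f x) -> In a l ->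
  f a + fold_right Rplus 0 (map f (remove Nat.eq_dec a l)) <= fold_right Rplus 0 (map f l).
Proof. intros H; induction l; simpl; [tauto|]. intros Hin.
  destruct (Nat.eq_dec a a0); simpl.
  - subst. pose proof (sum_remove_le f a0 l H). lra.
  - destruct Hin as [->|Hin]; [congruence|]. specialize (IHl Hin). lra. Qed.

Lemma sum_sub_le (f : nat -> R) N l : (forall x, 0 <= f x) -> NoDup N -> incl N l ->
  fold_right Rplus 0 (map f N) <= fold_right Rplus 0 (map f l).
Proof. intros H; revert l; induction N as [|a N IH]; intros l Hnd Hinc; simpl.
  - clear Hinc. induction l; simpl; [lra|]. specialize (H a). lra.
  - inversion Hnd; subst.
    assert (Hin : In a l) by (apply Hinc; left; auto).
    pose proof (sum_remove_in f a l H Hin).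
    assert (incl N (remove Nat.eq_dec a l)).
    { intros x Hx. apply in_in_remove. intro; subst; tauto. apply Hinc; right; auto. }
    specialize (IH _ H3 H1). lra. Qed.

Lemma bernoulli (x : R) d : -1 <= x -> 1 + INR d * x <= (1 + x) ^ d.
Proof. intros Hx. induction d; [simpl; lra|]. rewrite S_INR. cbn [pow].
  assert (0 <= INR d) by apply pos_INR.
  assert (0 <= INR d * (x*x)) by (apply Rmult_le_pos; nra).
  nra. Qed.

Lemma exp_pow_n x d : exp x ^ d = exp (INR d * x).
Proof. induction d. simpl. rewrite Rmult_0_l, exp_0; lra.
  cbn [pow]. rewrite IHd, S_INR, <- exp_plus. f_equal; ring. Qed.

Lemma pow_strict a b d : 0 <= a < b -> a ^ S d < b ^ S d.
Proof. intros H; induction d. simpl; lra.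
  change (a * a ^ S d < b * b ^ S d). assert (0 <= a ^ S d) by (apply pow_le; lra). nra. Qed.

Lemma firstn_S_nth (l : list nat) t : (t < length l)%nat ->
  firstn (S t) l = firstn t l ++ [nth t l 0%nat].
Proof. revert t; induction l; intros t H; simpl in *; [lia|].
  destruct t; simpl; auto. rewrite IHl by lia. auto. Qed.

Lemma filter_firstn_le (f : nat -> bool) (l : list nat) t k : (t <= k)%nat ->
  (length (filter f (firstn t l)) <= length (filter f (firstn k l)))%nat.
Proof. intros H. replace (firstn t l) with (firstn t (firstn k l)).
  2:{ rewrite firstn_firstn. f_equal. lia. }
  generalize (firstn k l); intro l'.
  rewrite <- (firstn_skipn t l') at 2. rewrite filter_app, length_app. lia. Qed.

Lemma natsum_le (f g : nat -> nat) l : (forall x, In x l -> f x <= g x)%nat ->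
  (fold_right Nat.add 0 (map f l) <= fold_right Nat.add 0 (map g l))%nat.
Proof. induction l; simpl; intros H; [lia|].
  assert (f a <= g a)%nat by auto. assert (fold_right Nat.add 0 (map f l) <= fold_right Nat.add 0 (map g l))%nat by auto. lia. Qed.

Lemma natsum_small (f : nat -> nat) lam l :
  (fold_right Nat.add 0 (map f l) < lam * length l)%nat -> exists i, In i l /\ (f i < lam)%nat.
Proof. induction l; simpl; intros H; [lia|].
  destruct (Nat.lt_ge_cases (f a) lam). exists a; auto.
  destruct IHl as [i [? ?]]. nia. exists i; auto. Qed.
Lemma geom_eq lam : (1 <= lam)%nat -> forall j,
  geom_weights ((INR lam + 1) / INR lam) j = (INR lam / (INR lam + 1)) ^ j.
Proof. intros H j. assert (1 <= INR lam) by (apply (le_INR 1) in H; simpl in H; lra).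
  unfold geom_weights. rewrite <- pow_inv. f_equal. field. lra. Qed.

Lemma wsum_S w c : wsum w (S c) = wsum w c + w (S c).
Proof. unfold wsum. rewrite seq_S, map_app, sum_app. simpl.
  replace (1 + c)%nat with (S c) by lia. lra. Qed.

Lemma wsum_geom lam c : (1 <= lam)%nat ->
  wsum (geom_weights ((INR lam + 1) / INR lam)) c = INR lam * (1 - (INR lam / (INR lam + 1)) ^ c).
Proof. intros H. assert (1 <= INR lam) by (apply (le_INR 1) in H; simpl in H; lra).
  induction c. unfold wsum; simpl; ring.
  rewrite wsum_S, IHc, geom_eq by auto. cbn [pow]. field. lra. Qed.

Lemma count_app P i Sl a : approved_count P i (Sl ++ [a]) =
  (approved_count P i Sl + if P i a then 1 else 0)%nat.
Proof. unfold approved_count. rewrite filter_app, length_app. simpl.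
  destruct (P i a); simpl; lia. Qed.

Lemma gain_formula w P n Sl a : wscore w P n (Sl ++ [a]) - wscore w P n Sl =
  fold_right Rplus 0 (map (fun i => if P i a then w (S (approved_count P i Sl)) else 0) (seq 0 n)).
Proof. unfold wscore. rewrite sum_map_sub. f_equal. apply map_ext. intro i.
  rewrite count_app. destruct (P i a).
  - rewrite Nat.add_1_r, wsum_S. ring.
  - rewrite Nat.add_0_r. ring. Qed.

Lemma keyineq lam x : (1 <= lam)%nat ->
  (INR lam / (INR lam + 1)) ^ (S lam) * (1 - (1 / (INR lam + 1)) * (INR x - INR lam))
  <= (INR lam / (INR lam + 1)) ^ (S x).
Proof. intros H. assert (HL : 1 <= INR lam) by (apply (le_INR 1) in H; simpl in H; lra).
  set (L := INR lam) in *. set (q := L / (L + 1)).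
  assert (Hq0 : 0 < q) by (unfold q; apply Rdiv_lt_0_compat; lra).
  assert (Hc : 1 / (L + 1) = 1 - q) by (unfold q; field; lra).
  assert (Hq1 : q < 1) by (assert (0 < 1/(L+1)) by (apply Rdiv_lt_0_compat; lra); lra).
  rewrite Hc.
  destruct (Nat.le_gt_cases lam x).
  - replace x with (lam + (x - lam))%nat by lia. set (d := (x - lam)%nat).
    rewrite plus_INR. fold L. replace (S (lam + d)) with (S lam + d)%nat by lia.
    rewrite pow_add.
    pose proof (bernoulli (q - 1) d ltac:(lra)). replace (1 + (q - 1)) with q in H1 by ring.
    assert (0 < q ^ S lam) by (apply pow_lt; auto).
    replace (L + INR d - L) with (INR d) by ring. nra.
  - set (d := (lam - x)%nat).
    assert (Hl : L = INR x + INR d) by (unfold L, d; rewrite <- plus_INR; f_equal; lia).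
    replace (S lam) with (S x + d)%nat by (unfold d; lia).
    rewrite pow_add.
    replace (INR x - L) with (- INR d) by (rewrite Hl; ring).
    pose proof (bernoulli (1 / L) d ltac:(assert (0 < 1/L) by (apply Rdiv_lt_0_compat; lra); lra)).
    assert (Hm : q ^ d * (1 + 1 / L) ^ d = 1).
    { rewrite <- Rpow_mult_distr. replace (q * (1 + 1 / L)) with 1 by (unfold q; field; lra). apply pow1. }
    assert (0 <= INR d) by apply pos_INR.
    assert (1 - q <= 1 / L) by (rewrite <- Hc; apply Rmult_le_compat_l; [lra|];
       apply Rinv_le_contravar; lra).
    assert (0 < q ^ S x) by (apply pow_lt; auto).
    assert (0 < q ^ d) by (apply pow_lt; auto).
    assert (q ^ d * (1 - (1 - q) * - INR d) <= 1).
    { rewrite <- Hm. apply Rmult_le_compat_l; nra. }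
    nra. Qed.
Theorem corollary1 (lam : nat) (hlam : (1 <= lam)%nat)
  (alpha : R) (halpha_rat : exists q : Q, Q2R q = alpha)
  (halpha : 0 < alpha <= 1)
  (n m : nat) (hn : (1 <= n)%nat) (P : nat -> nat -> bool)
  (hP : valid_profile P n m)
  (r : list nat)
  (hr : is_geometric_output ((INR lam + 1) / INR lam) P n m r)
  (N' : list nat) (hN' : significant P n m alpha lam N')
  (k : nat) (hk : is_ceil k (exp 1 * (INR lam + 1) / alpha)) :
  avg P N' (firstn k r) >= INR lam.
Proof.
  destruct hN' as [Hnd [Hlt [[Hs1 Hs2] Hcoh]]].
  destruct hr as [Hperm Hrav].
  assert (HL : 1 <= INR lam) by (apply (le_INR 1) in hlam; simpl in hlam; lra).
  assert (Hn : 1 <= INR n) by (apply (le_INR 1) in hn; simpl in hn; lra).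
  assert (Hs : 0 < INR (length N')) by (assert (0 < alpha * INR n) by (apply Rmult_lt_0_compat; lra); lra).
  set (w := geom_weights ((INR lam + 1) / INR lam)) in *.
  set (q := INR lam / (INR lam + 1)).
  assert (Hq0 : 0 < q) by (unfold q; apply Rdiv_lt_0_compat; lra).
  set (s := length N') in *.
  set (T := fun t => fold_right Nat.add 0%nat (map (fun i => approved_count P i (firstn t r)) N')).
  assert (Hlen : length r = m) by (rewrite (Permutation_length Hperm), length_seq; auto).
  destruct (Nat.lt_ge_cases (T k) (lam * s)) as [HT|HT].
  2:{ unfold avg. change (INR (T k) / INR s >= INR lam).
      apply le_INR in HT. rewrite mult_INR in HT.
      apply Rle_ge. replace (INR lam) with (INR lam * INR s / INR s) by (field; lra).
      apply Rmult_le_compat_r; [left; apply Rinv_0_lt_compat; lra | lra]. }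
  exfalso.
  assert (Hstep : forall t, (t < k)%nat ->
     INR s * q ^ (S lam) <= wscore w P n (firstn (S t) r) - wscore w P n (firstn t r)).
  { intros t Ht.
    assert (HTt : (T t < lam * s)%nat).
    { assert (T t <= T k)%nat; [|lia]. unfold T. apply natsum_le. intros x _.
      unfold approved_count. apply filter_firstn_le. lia. }
    destruct (natsum_small _ _ _ HTt) as [i [Hi Hxi]].
    set (C := filter (fun a => forallb (fun j => P j a) N') (seq 0 m)).
    assert (Hni : ~ incl C (filter (P i) (firstn t r))).
    { intro Hinc. pose proof (NoDup_incl_length (NoDup_filter _ (seq_NoDup m 0)) Hinc).
      unfold cohesiveness in Hcoh. unfold approved_count in Hxi. change (fun a => P i a) with (P i) in Hxi. unfold C in H. lia. }
    unfold incl in Hni. apply not_all_ex_not in Hni. destruct Hni as [c Hc].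
    apply imply_to_and in Hc. destruct Hc as [HcC Hcn].
    unfold C in HcC. apply filter_In in HcC. destruct HcC as [Hcm Hcall].
    apply in_seq in Hcm. rewrite forallb_forall in Hcall.
    assert (Hnin : ~ In c (firstn t r)).
    { intro H. apply Hcn. apply filter_In. split; auto. }
    assert (Htm : (t < m)%nat).
    { destruct (Nat.lt_ge_cases t m) as [?|Hge]; auto. exfalso.
      rewrite firstn_all2 in Hnin by lia. apply Hnin.
      apply Permutation_in with (seq 0 m); [symmetry; auto | apply in_seq; lia]. }
    rewrite firstn_S_nth by lia.
    specialize (Hrav t Htm c ltac:(lia) Hnin).
    eapply Rle_trans; [|exact Hrav].
    rewrite gain_formula.
    eapply Rle_trans; [|apply sum_sub_le with (N := N')]; [ | | exact Hnd | ].
    3:{ intros x Hx. apply in_seq. specialize (Hlt x Hx). lia. }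
    2:{ intros x. destruct (P x c); [unfold w; rewrite geom_eq by auto; left; apply pow_lt; auto | lra]. }
    rewrite (map_ext_in _ (fun i => q ^ S (approved_count P i (firstn t r)))).
    2:{ intros x Hx. rewrite (Hcall x Hx). unfold w. rewrite geom_eq by auto. reflexivity. }
    eapply Rle_trans; [|apply sum_map_le with
      (f := fun i => q ^ S lam * (1 + 1 / (INR lam + 1) * INR lam) + (- (q ^ S lam * (1 / (INR lam + 1)))) * INR (approved_count P i (firstn t r)))].
    2:{ intros x _. eapply Rle_trans; [|apply keyineq; auto]. fold q. right; ring. }
    rewrite sum_affine. fold s. change (fold_right Nat.add 0%nat _) with (T t).
    apply le_INR in HTt. rewrite mult_INR, S_INR in HTt.
    assert (0 < q ^ S lam) by (apply pow_lt; auto).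
    assert (0 < 1 / (INR lam + 1)) by (apply Rdiv_lt_0_compat; lra).
    assert (0 <= q ^ S lam * (1 / (INR lam + 1))) by (apply Rmult_le_pos; lra).
    assert (INR (T t) <= INR lam * INR s) by lra.
    nra. }
  assert (Hind : forall t, (t <= k)%nat -> INR t * (INR s * q ^ S lam) <= wscore w P n (firstn t r)).
  { induction t; intros Ht.
    - simpl firstn. rewrite Rmult_0_l. unfold wscore. clear. induction (seq 0 n) as [|a l IH]; simpl; [lra|].
      unfold wsum at 1. simpl. lra.
    - rewrite S_INR. specialize (IHt ltac:(lia)). specialize (Hstep t ltac:(lia)). lra. }
  specialize (Hind k (le_n k)).
  assert (Hub : wscore w P n (firstn k r) <= INR n * INR lam).
  { unfold wscore. rewrite <- (length_seq n 0) at 2. apply sum_map_const_le. intros x _.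
    unfold w. rewrite wsum_geom by auto. fold q.
    assert (0 <= q ^ approved_count P x (firstn k r)) by (apply pow_le; lra). nra. }
  destruct hk as [_ Hk].
  assert (Hks : exp 1 * (INR lam + 1) * INR n <= INR k * INR s).
  { replace (exp 1 * (INR lam + 1) * INR n) with (exp 1 * (INR lam + 1) / alpha * (alpha * INR n))
      by (field; lra).
    assert (0 <= exp 1 * (INR lam + 1) / alpha).
    { apply Rmult_le_pos; [| left; apply Rinv_0_lt_compat; lra].
      apply Rmult_le_pos; [left; apply exp_pos | lra]. }
    apply Rmult_le_compat; auto. apply Rmult_le_pos; lra. }
  assert (Hp : (1 + 1 / INR lam) ^ lam < exp 1).
  { destruct lam as [|l]; [lia|].
    replace (exp 1) with (exp (1 / INR (S l)) ^ S l).
    2:{ rewrite exp_pow_n. f_equal. field. lra. }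
    apply pow_strict. split. assert (0 < 1 / INR (S l)) by (apply Rdiv_lt_0_compat; lra); lra.
    apply exp_ineq1. assert (0 < 1 / INR (S l)) by (apply Rdiv_lt_0_compat; lra); lra. }
  assert (Hqp : q ^ lam * (1 + 1 / INR lam) ^ lam = 1).
  { rewrite <- Rpow_mult_distr. replace (q * (1 + 1 / INR lam)) with 1 by (unfold q; field; lra). apply pow1. }
  assert (HqS : (INR lam + 1) * q ^ S lam = INR lam * q ^ lam).
  { cbn [pow]. unfold q. field. lra. }
  assert (Hql : 0 < q ^ lam) by (apply pow_lt; auto).
  assert (H1 : 1 < exp 1 * q ^ lam).
  { assert (0 < (1 + 1 / INR lam) ^ lam) by (apply pow_lt; assert (0 < 1 / INR lam) by (apply Rdiv_lt_0_compat; lra); lra).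
    nra. }
  assert (0 < q ^ S lam) by (apply pow_lt; auto).
  assert (exp 1 * (INR lam + 1) * INR n * q ^ S lam <= INR k * INR s * q ^ S lam).
  { apply Rmult_le_compat_r; lra. }
  assert (exp 1 * (INR lam + 1) * INR n * q ^ S lam = INR n * INR lam * (exp 1 * q ^ lam)).
  { replace (exp 1 * (INR lam + 1) * INR n * q ^ S lam) with (exp 1 * INR n * ((INR lam + 1) * q ^ S lam)) by ring.
    rewrite HqS. ring. }
  assert (INR n * INR lam * 1 < INR n * INR lam * (exp 1 * q ^ lam)).
  { apply Rmult_lt_compat_l; [nra | lra]. }
  nra.
Qed.
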